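(* Let $n\ge3$, $x^\Lambda\partial_k\in\mathcal{B}$ and $i\ge-1$. If $\mathrm{lev}_i(x^\Lambda\partial_k)\le i$, then there exists an integer $j$ with $-1\le j\le i$ such that $\mathrm{lev}_j(x^\Lambda\partial_k)=j$.
   Context: Fix an integer $n\ge 3$. A partition is a sequence $\Lambda=(\lambda_j)_{j\ge1}$ of non-negative integers with finite support; $\mathrm{wt}(\Lambda)=\sum_j j\lambda_j$; $\mathrm{Part}(k)$ is the set of partitions with $\lambda_j=0$ for $j>k$. Write $x^\Lambda=\prod_j x_j^{\lambda_j}$, $\deg(x^\Lambda)=\sum_j\lambda_j$. $\mathcal{B}=\{x^\Lambda\partial_k : 1\le k\le n,\ \Lambda\in\mathrm{Part}(k-1)\}$. For an integer $i\ge-1$, let $r_i\in\{1,\dots,n-1\}$ with $i\equiv r_i\pmod{n-1}$ and $h_i=\lfloor (i-1)/(n-1)\rfloor+1$. Define $\mathrm{WD}(x^\Lambda\partial_k)=\mathrm{wt}(\Lambda)-\deg(x^\Lambda)+n-k$ and $\mathrm{lev}_i(x^\Lambda\partial_k)=h_i\,\mathrm{WD}(x^\Lambda\partial_k)+\deg(x^\Lambda)-1$. *)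

(* Defs.v *)
From mathcomp Require Import all_boot all_order all_algebra.
Set Implicit Arguments. Unset Strict Implicit. Unset Printing Implicit Defensive.
Import Order.TTheory GRing.Theory Num.Theory.

(* A partition Λ = (λ_j)_{j>=1} is encoded by a finite list [lam] with
   nth 0 lam (j-1) = λ_j; entries beyond the list are 0.
   Λ ∈ Part(k-1) iff size lam <= k-1. *)
Definition inPart (m : nat) (lam : seq nat) : bool := size lam <= m.

Definition wt (lam : seq nat) : nat := \sum_(j < size lam) j.+1 * nth 0 lam j.
Definition deg (lam : seq nat) : nat := \sum_(j < size lam) nth 0 lam j.

Definition inB (n k : nat) (lam : seq nat) : bool :=
  [&& 1 <= k, k <= n & inPart k.-1 lam].

Local Open Scope ring_scope.

(* h_i = floor((i-1)/(n-1)) + 1  (divz is floor division for positive divisor) *)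
Definition h (n : nat) (i : int) : int := ((i - 1) %/ (n%:Z - 1))%Z + 1.

Definition WD (n k : nat) (lam : seq nat) : int :=
  (wt lam)%:Z - (deg lam)%:Z + n%:Z - k%:Z.

Definition lev (n : nat) (i : int) (k : nat) (lam : seq nat) : int :=
  h n i * WD n k lam + (deg lam)%:Z - 1.

(* Main.v *)
Require Import Defs.
From mathcomp Require Import all_boot all_order all_algebra zify.
Import Order.TTheory GRing.Theory Num.Theory.
Local Open Scope ring_scope.

Lemma deg_le_wt lam : (deg lam <= wt lam)%N.
Proof. rewrite /deg /wt; apply: leq_sum => j _; exact: leq_pmull. Qed.

Lemma WD_ge0 n k lam : (k <= n)%N -> 0 <= WD n k lam.
Proof. move=> hk; have := deg_le_wt lam; rewrite /WD; lia. Qed.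

Lemma h_mono n a b : (3 <= n)%N -> a <= b -> h n a <= h n b.
Proof.
move=> hn ab; rewrite /h lerD2r; apply: lez_pdiv2r; lia.
Qed.

Lemma h_m1 n : (3 <= n)%N -> 0 <= h n (-1).
Proof.
move=> hn; rewrite /h.
have : ((- (n%:Z - 1)) %/ (n%:Z - 1))%Z <= ((-1 - 1) %/ (n%:Z - 1))%Z.
  apply: lez_pdiv2r; lia.
have -> : (- (n%:Z - 1)) = (-1) * (n%:Z - 1) by rewrite mulN1r.
rewrite mulzK; last lia.
lia.
Qed.

Theorem lemma2p5 (n k : nat) (lam : seq nat) (i : int) :
  (3 <= n)%N -> inB n k lam -> -1 <= i ->
  lev n i k lam <= i ->
  exists j : int, [/\ -1 <= j, j <= i & lev n j k lam = j].
Proof.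
move=> hn /and3P[_ hk _] hi.
have W0 := @WD_ge0 n k lam hk.
pose f (j : int) := lev n j k lam - j.
have f0 : 0 <= f (-1).
  rewrite /f /lev; have := @h_m1 n hn; have := mulr_ge0 (@h_m1 n hn) W0. lia.
have fS : forall j : int, -1 <= j -> f j - 1 <= f (j + 1).
  move=> j hj; rewrite /f /lev.
  have := ler_wpM2r W0 (@h_mono n _ _ hn (ltac:(lia) : j <= j + 1)). lia.
have : exists N : nat, i = N%:Z - 1 by exists (absz (i + 1)); lia.
case=> N ->; elim: N => [|N IH] hle.
  rewrite (_ : 0%:Z - 1 = -1) in hle *; last by [].
  exists (-1); split => //; rewrite /f in f0; lia.
have [hp|hp] := lerP (lev n (N%:Z - 1) k lam) (N%:Z - 1).
  by case: (IH hp) => j [a b c]; exists j; split => //; lia.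
have hh := fS (N%:Z - 1) ltac:(lia). rewrite /f in hh.
have e : N%:Z - 1 + 1 = N.+1%:Z - 1 by lia. rewrite e in hh.
exists (N.+1%:Z - 1); split => //; lia.
Qed.
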